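(* Let $F_0,F_1$ be an affine pair of communicating SR-machines. If the protocol is deadlock-free, then it has the bounded channel property if and only if neither $F_0$ nor $F_1$ has a send cycle.
   Context: A pair of communicating SR-machines is a CFSM protocol with communication graph having nodes $\{0,1\}$ and two edges $\alpha$ (from $0$ to $1$) and $\beta$ (from $1$ to $0$), disjoint finite message alphabets $M_\alpha,M_\beta$, and two finite state machines $F_j=(K_j,\Sigma_j,T_j,h_j)$, $j=0,1$, with $\Sigma_0=\{-b:b\in M_\alpha\}\cup\{+b:b\in M_\beta\}$, $\Sigma_1=\{-b:b\in M_\beta\}\cup\{+b:b\in M_\alpha\}$, $K_j$ finite, $h_j\in K_j$ initial, $T_j\subseteq K_j\times\Sigma_j\times K_j$ (transitions written $p\xrightarrow{e}q$; $+b$ = receive, $-b$ = send; $p\xrightarrow{w}q$ for $w\in\Sigma_j^*$ means a directed path labelled $w$). A state is a send state if it has no outgoing $+b$ transition and a receive state if it has no outgoing $-b$ transition. $F_j$ is an SR-machine if every state is a send or a receive state, its transition diagram is strongly connected, and $p\xrightarrow{e}q_1$, $p\xrightarrow{e}q_2$ imply $q_1=q_2$. Global states are $((p_0,p_1),(x_\alpha,x_\beta))$; initially $((h_0,h_1),(\lambda,\lambda))$. A step is either a send (a machine performs $p\xrightarrow{-b}q$ and $b$ is appended to its output channel: $\alpha$ for $F_0$, $\beta$ for $F_1$) or a receive (a machine performs $p\xrightarrow{+b}q$ and $b$ is removed from the front of its input channel, $\beta$ for $F_0$, $\alpha$ for $F_1$, which must begin with $b$); the other machine is unchanged. Reachable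 means reachable from the initial global state. A global state is deadlocked if both components are receive states and both channels are empty; the protocol is deadlock-free if no deadlocked global state is reachable. It has the bounded channel property if $|x_\alpha|+|x_\beta|$ is bounded over all reachable global states. $\pi_\alpha(w)$ (resp. $\pi_\beta(w)$) is the string of symbols of $M_\alpha$ (resp. $M_\beta$) occurring in $w$, in order, signs removed; $\mathbf Z_j=\{(\pi_\alpha(w),\pi_\beta(w)): h_j\xrightarrow{w}h_j \text{ in } F_j\}$; the pair is affine if $\mathbf Z_0=\mathbf Z_1$. A send cycle of $F_j$ is a directed cycle in its transition diagram all of whose labels are of the form $-b$. *)

(* Defs.v *)
From mathcomp Require Import all_boot.
Set Implicit Arguments. Unset Strict Implicit. Unset Printing Implicit Defensive.

(* A machine with own-output alphabet S and input alphabet R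
   has events of type S + R:  inl s  is the send event  -s,
                              inr r  is the receive event +r.
   F_0 : events Ma + Mb (sends on alpha, receives on beta);
   F_1 : events Mb + Ma (sends on beta, receives on alpha).
   Disjointness of Ma and Mb is built in (they are distinct types / the
   channel of each message is determined by its type). *)

Section Machine.
Variables (S R K : finType) (T : K -> S + R -> K -> bool).

Fixpoint walk (p : K) (w : seq (S + R)) (q : K) : Prop :=
  match w with
  | [::] => p = q
  | e :: w' => exists r, T p e r /\ walk r w' q
  end.

Definition send_state (p : K) : Prop := forall (r : R) (q : K), ~~ T p (inr r) q.
Definition receive_state (p : K) : Prop := forall (s : S) (q : K), ~~ T p (inl s) q.

Definition SR_machine : Prop :=
  [/\ (forall p, send_state p \/ receive_state p),
      (forall p q, exists w, walk p w q) &
      (forall p e q1 q2, T p e q1 -> T p e q2 -> q1 = q2)].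

Definition sends (w : seq (S + R)) : seq S :=
  pmap (fun e => if e is inl s then Some s else None) w.
Definition recvs (w : seq (S + R)) : seq R :=
  pmap (fun e => if e is inr r then Some r else None) w.

Definition has_send_cycle : Prop :=
  exists (p : K) (w : seq (S + R)),
    w != [::] /\ walk p w p /\ all (fun e => if e is inl _ then true else false) w.
End Machine.

Section Protocol.
Variables (Ma Mb K0 K1 : finType) (h0 : K0) (h1 : K1)
          (T0 : K0 -> Ma + Mb -> K0 -> bool) (T1 : K1 -> Mb + Ma -> K1 -> bool).

(* Z_0 = Z_1, with Z_j the set of pairs (pi_alpha w, pi_beta w) for h_j --w--> h_j *)
Definition affine : Prop :=
  forall (xa : seq Ma) (xb : seq Mb),
    (exists w, walk T0 h0 w h0 /\ sends w = xa /\ recvs w = xb) <->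
    (exists w, walk T1 h1 w h1 /\ recvs w = xa /\ sends w = xb).

(* global state: ((p0, p1), (x_alpha, x_beta)) *)
Definition gstate := ((K0 * K1) * (seq Ma * seq Mb))%type.

Inductive step : gstate -> gstate -> Prop :=
| step_send0 p0 q0 p1 xa xb a :
    T0 p0 (inl a) q0 -> step ((p0, p1), (xa, xb)) ((q0, p1), (rcons xa a, xb))
| step_recv0 p0 q0 p1 xa xb b :
    T0 p0 (inr b) q0 -> step ((p0, p1), (xa, b :: xb)) ((q0, p1), (xa, xb))
| step_send1 p0 p1 q1 xa xb b :
    T1 p1 (inl b) q1 -> step ((p0, p1), (xa, xb)) ((p0, q1), (xa, rcons xb b))
| step_recv1 p0 p1 q1 xa xb a :
    T1 p1 (inr a) q1 -> step ((p0, p1), (a :: xa, xb)) ((p0, q1), (xa, xb)).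

Definition init_gstate : gstate := ((h0, h1), ([::], [::])).

Inductive reachable : gstate -> Prop :=
| reach_init : reachable init_gstate
| reach_step g g' : reachable g -> step g g' -> reachable g'.

Definition deadlocked (g : gstate) : Prop :=
  [/\ receive_state T0 g.1.1, receive_state T1 g.1.2, g.2.1 = [::] & g.2.2 = [::]].

Definition deadlock_free : Prop := forall g, reachable g -> ~ deadlocked g.

Definition bounded_channel : Prop :=
  exists N : nat, forall g, reachable g -> size g.2.1 + size g.2.2 <= N.
End Protocol.

(* Main.v *)
Require Import Defs.
From mathcomp Require Import all_boot.
From mathcomp Require Import zify.
Set Implicit Arguments. Unset Strict Implicit. Unset Printing Implicit Defensive.
Section Gen.
Variables (S R K : finType) (T : K -> S + R -> K -> bool).

Definition isS (e : S + R) : bool := if e is inl _ then true else false.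
Definition isR (e : S + R) : bool := if e is inr _ then true else false.

Definition Pcycle (P : pred (S + R)) :=
  exists p w, w != [::] /\ walk T p w p /\ all P w.

Lemma walk_cat p w1 w2 q :
  walk T p (w1 ++ w2) q <-> exists r, walk T p w1 r /\ walk T r w2 q.
Proof.
elim: w1 p => [|e w1 IH] p /=.
  by split; [exists p | case=> r [-> ]].
split.
  case=> r [Tr /IH [m [W1 W2]]]. exists m. split => //. by exists r.
case=> m [[r [Tr W1]] W2]. exists r; split => //. apply/IH. by exists m.
Qed.

Lemma walk_rcons p w e r q : walk T p w r -> T r e q -> walk T p (rcons w e) q.
Proof.
move=> W Te; rewrite -cats1; apply/walk_cat; exists r; split => //.
by exists q.
Qed.

Lemma sends_cat (w1 w2 : seq (S + R)) : sends (w1 ++ w2) = sends w1 ++ sends w2.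
Proof. exact: pmap_cat. Qed.
Lemma recvs_cat (w1 w2 : seq (S + R)) : recvs (w1 ++ w2) = recvs w1 ++ recvs w2.
Proof. exact: pmap_cat. Qed.

Lemma size_sends (w : seq (S + R)) : size (sends w) = count isS w.
Proof. by elim: w => //= [[s|r] w IH]; rewrite /sends /= -?IH. Qed.
Lemma size_recvs (w : seq (S + R)) : size (recvs w) = count isR w.
Proof. by elim: w => //= [[s|r] w IH]; rewrite /recvs /= -?IH. Qed.

Lemma predC_isS (w : seq (S + R)) : count (predC isS) w = count isR w.
Proof. by apply: eq_count => -[]. Qed.
Lemma predC_isR (w : seq (S + R)) : count (predC isR) w = count isS w.
Proof. by apply: eq_count => -[]. Qed.

Lemma run_bound P : ~ Pcycle P -> forall w p q (V : {set K}),
  walk T p w q -> all P w -> p \in V ->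
  (forall v, v \in V -> exists w', walk T v w' p /\ all P w') ->
  size w + #|V| <= #|K|.
Proof.
move=> nc; elim=> [|e w IH] p q V /=.
  by move=> _ _ _ _; exact: max_card.
case=> r [Tpr Wr] /andP [Pe Pw] pV HV.
case: (boolP (r \in V)) => rV.
  exfalso; apply: nc. case: (HV r rV) => w' [W' P'].
  exists r, (rcons w' e). split; first by case: (w').
  split; first exact: walk_rcons W' Tpr.
  by rewrite all_rcons Pe P'.
have H' : forall v, v \in r |: V -> exists w', walk T v w' r /\ all P w'.
  move=> v; rewrite in_setU1 => /orP [/eqP -> | vV].
    by exists [::].
  case: (HV v vV) => w' [W' P']. exists (rcons w' e); split.
    exact: walk_rcons W' Tpr.
  by rewrite all_rcons Pe P'.
have := IH r q (r |: V) Wr Pw (setU11 r V) H'.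
rewrite cardsU1 rV /=. lia.
Qed.

Lemma split_allP (P : pred (S + R)) w :
  exists w1 w2, w = w1 ++ w2 /\ all P w1 /\
     (w2 = [::] \/ exists e w2', w2 = e :: w2' /\ ~~ P e).
Proof.
elim: w => [|e w [w1 [w2 [-> [A1 H2]]]]].
  by exists [::], [::]; split => //; split => //; left.
case: (boolP (P e)) => Pe.
  exists (e :: w1), w2; split => //; split => //=. by rewrite Pe A1.
exists [::], (e :: w1 ++ w2); split => //; split => //; right.
by exists e, (w1 ++ w2).
Qed.

Lemma count_bound P : ~ Pcycle P -> forall w p q, walk T p w q ->
  count P w <= #|K| * (count (predC P) w).+1.
Proof.
move=> nc w; have [n] := ubnP (size w); elim: n w => // n IH w.
move=> Hs p q W.
have [w1 [w2 [E [A1 H2]]]] := split_allP P w.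
move: W; rewrite E => /walk_cat [m [W1 W2]].
have HV : forall v, v \in [set p] -> exists w', walk T v w' p /\ all P w'.
  by move=> v /set1P ->; exists [::].
have B1 := run_bound nc W1 A1 (set11 p) HV.
rewrite cards1 in B1.
have {}B1 : size w1 + 1 <= #|K| := B1.
have C1 : count P w1 = size w1 by apply/eqP; rewrite -all_count.
have D1 : count (predC P) w1 = 0 by apply/eqP; rewrite -leqn0 leqNgt -has_count has_predC negbK.
case: H2 => [-> | [e [w2' [E2 Pe]]]].
  rewrite cats0 C1 D1. lia.
move: W2; rewrite E2 => -[r [_ W2']].
have Hs' : size w2' < n by move: Hs; rewrite E E2 size_cat /=; lia.
have := IH w2' Hs' r q W2'.
rewrite !count_cat /= C1 D1 (negbTE Pe) /=.
move=> H; rewrite !add0n add1n mulnS. set k := #|K| in B1 H *. lia.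
Qed.


Lemma recvs_split (w : seq (S + R)) x t : recvs w = x ++ t ->
  exists w1 w2, w = w1 ++ w2 /\ recvs w1 = x.
Proof.
elim: w x => [|e w IH] x /=.
  by case: x => // _; exists [::], [::].
case: e => [s|r] /=.
  rewrite {1}/recvs /= => /IH [w1 [w2 [-> H]]]. by exists (inl s :: w1), w2.
case: x => [|y x].
  by move=> _; exists [::], (inr r :: w).
rewrite {1}/recvs /= => -[-> /IH [w1 [w2 [-> H]]]].
by exists (inr y :: w1), w2; rewrite /recvs /= -/(recvs _) H.
Qed.

Lemma walk_det (sr : SR_machine T) p w q1 q2 :
  walk T p w q1 -> walk T p w q2 -> q1 = q2.
Proof.
case: sr => _ _ det.
elim: w p => [|e w IH] p /=; first by move=> -> ->.
case=> r1 [T1 W1] [r2 [T2 W2]]. have E := det _ _ _ _ T1 T2. subst r2.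
exact: IH W1 W2.
Qed.

Lemma sends_nil_bound (ns : ~ Pcycle isS) p w q :
  walk T p w q -> recvs w = [::] -> size (sends w) <= #|K|.
Proof.
move=> W r0. have := count_bound ns W.
by rewrite predC_isS -size_recvs r0 size_sends muln1.
Qed.

Lemma keyL (sr : SR_machine T) (ns : ~ Pcycle isS) (nr : ~ Pcycle isR) :
  forall u p q U q' (A : seq S),
  walk T p u q -> walk T p U q' ->
  (exists t, recvs U = recvs u ++ t) ->
  (exists t, sends u = A ++ t) -> (exists t, sends U = A ++ t) ->
  size (sends u) <= size A + (1 + #|K| + #|K| * #|K|) * (size (sends U) - size A).+1.
Proof.
case: (sr) => srt _ det.
elim=> [|e u IH] p q U q' A Wu WU [t HR] [t1 HA1] [t2 HA2] //.
case: U WU HR HA2 => [|e' U] WU HR HA2.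
  have r0 : recvs (e :: u) = [::].
    by move: HR; case: (recvs (e :: u)).
  have := sends_nil_bound ns Wu r0.
  move: HA2 => /(congr1 size); rewrite size_cat /= => sA.
  have -> : size A = 0 by lia.
  set k := #|K|. nia.
case: Wu => r [Te Wu]. case: WU => r' [Te' WU].
case: (eqVneq e e') => [Eee | Nee].
  subst e'. have Err := det _ _ _ _ Te Te'. subst r'.
  case: e Te Te' HR HA1 HA2 => [s|b] Te Te' HR HA1 HA2.
    rewrite /recvs /= -!/(recvs _) in HR.
    move: HA1 HA2; rewrite /sends /= -!/(sends _) => HA1 HA2.
    case: A HA1 HA2 => [|a A] HA1 HA2.
      have := IH r q U q' [::] Wu WU (ex_intro _ t HR)
                 (ex_intro _ (sends u) erefl) (ex_intro _ (sends U) erefl).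
      rewrite /= !subn0. set k := #|K|. nia.
    case: HA1 => _ HA1; case: HA2 => _ HA2.
    have := IH r q U q' A Wu WU (ex_intro _ t HR)
                 (ex_intro _ t1 HA1) (ex_intro _ t2 HA2).
    rewrite /= subSS. lia.
  rewrite /recvs /= -!/(recvs _) in HR. case: HR => HR.
  move: HA1 HA2; rewrite /sends /= -!/(sends _) => HA1 HA2.
  exact: IH r q U q' A Wu WU (ex_intro _ t HR)
                 (ex_intro _ t1 HA1) (ex_intro _ t2 HA2).
case: e e' Te Te' Nee HR HA1 HA2 => [s|b] [s'|b'] Te Te' Nee HR HA1 HA2.
-
  case: A HA1 HA2 => [|a A] HA1 HA2; last first.
    move: HA1 HA2; rewrite /sends /= => -[E1 _] [E2 _]; subst; by rewrite eqxx in Nee.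
  rewrite /recvs /= -!/(recvs _) in HR.
  have [U1 [U2 [EU RU1]]] := recvs_split HR.
  move: WU; rewrite EU => /walk_cat [m [WU1 _]].
  have B1 := count_bound ns Wu.
  have B2 := count_bound nr WU1.
  rewrite predC_isS -size_recvs -size_sends in B1.
  rewrite predC_isR -size_recvs -size_sends RU1 in B2.
  have B3 : size (sends U1) <= size (sends U).
    by rewrite EU sends_cat size_cat; lia.
  rewrite /sends /= -!/(sends _) /= !subn0.
  set k := #|K| in B1 B2 *. rewrite sends_cat size_cat. nia.
- case: (srt p) => H; [by move: (H b' r'); rewrite Te' | by move: (H s r); rewrite Te].
- case: (srt p) => H; [by move: (H b r); rewrite Te | by move: (H s' r'); rewrite Te'].
- rewrite /recvs /= -!/(recvs _) in HR. case: HR => Ebb _. subst b'.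
  by rewrite eqxx in Nee.
Qed.


Lemma hsc_P : ~ has_send_cycle T -> ~ Pcycle isS.
Proof. move=> H [p [w H']]; apply: H; exists p, w; exact: H'. Qed.

Lemma walk_iter p (w : seq (S + R)) k : walk T p w p -> walk T p (flatten (nseq k w)) p.
Proof.
move=> W; elim: k => [|k IH] //=. apply/walk_cat; by exists p.
Qed.

Lemma size_recvs_iter (w : seq (S + R)) k :
  size (recvs (flatten (nseq k w))) = k * size (recvs w).
Proof. elim: k => [|k IH] //=. by rewrite recvs_cat size_cat IH mulSn. Qed.
Lemma size_sends_iter (w : seq (S + R)) k :
  size (sends (flatten (nseq k w))) = k * size (sends w).
Proof. elim: k => [|k IH] //=. by rewrite sends_cat size_cat IH mulSn. Qed.

Lemma all_iter (P : pred (S + R)) (w : seq (S + R)) k :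
  all P w -> all P (flatten (nseq k w)).
Proof. move=> A; elim: k => [|k IH] //=. by rewrite all_cat A IH. Qed.

Lemma comp_bound (sr : SR_machine T) h :
  exists N, forall p, exists w, walk T p w h /\ size w <= N.
Proof.
case: sr => _ sc _.
suff: forall s : seq K, exists N, forall p, p \in s -> exists w, walk T p w h /\ size w <= N.
  case/(_ (enum K)) => N HN; exists N => p; apply: HN; by rewrite mem_enum.
elim=> [|x s [N HN]]; first by exists 0.
have [w Ww] := sc x h. exists (maxn N (size w)) => p; rewrite in_cons => /orP [/eqP -> | ps].
  exists w; split => //; exact: leq_maxr.
have [w' [W' S']] := HN p ps; exists w'; split => //; apply: leq_trans S' (leq_maxl _ _).
Qed.

End Gen.
Arguments isS {S R}.
Arguments isR {S R}.
Section Proto.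
Variables (Ma Mb K0 K1 : finType) (h0 : K0) (h1 : K1)
          (T0 : K0 -> Ma + Mb -> K0 -> bool) (T1 : K1 -> Mb + Ma -> K1 -> bool).

Notation reach := (reachable h0 h1 T0 T1).

Lemma no_rc0 : SR_machine T0 -> affine h0 h1 T0 T1 -> ~ has_send_cycle T1 ->
  ~ Pcycle T0 isR.
Proof.
move=> [_ sc _] aff ns1 [p [w [wn [Wp Rw]]]].
have [s Ws] := sc h0 p; have [t Wt] := sc p h0.
set L := size (sends s) + size (sends t).
pose k := (#|K1| * L.+1).+1.
have hk : k = (#|K1| * L.+1).+1 by [].
clearbody k.
set c := s ++ flatten (nseq k w) ++ t.
have Wc : walk T0 h0 c h0.
  apply/walk_cat; exists p; split => //; apply/walk_cat; exists p; split => //.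
  exact: walk_iter.
have [W [WW [RW SW]]] := (aff (sends c) (recvs c)).1 (ex_intro _ c (conj Wc (conj erefl erefl))).
have := count_bound (hsc_P ns1) WW.
rewrite predC_isS -size_recvs -size_sends RW SW /c !sends_cat !recvs_cat !size_cat.
rewrite size_sends_iter size_recvs_iter.
have -> : size (sends w) = 0 by rewrite size_sends; apply/eqP; rewrite -leqn0 leqNgt -has_count; apply/hasPn => -[x|x] // /(allP Rw).
have : 0 < size (recvs w) by rewrite size_recvs; move: (Rw); rewrite all_count => /eqP ->; case: (w) wn.
rewrite /L in hk. set r := size (recvs w). move=> r0. nia.
Qed.

Lemma no_rc1 : SR_machine T1 -> affine h0 h1 T0 T1 -> ~ has_send_cycle T0 ->
  ~ Pcycle T1 isR.
Proof.
move=> [_ sc _] aff ns0 [p [w [wn [Wp Rw]]]].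
have [s Ws] := sc h1 p; have [t Wt] := sc p h1.
set L := size (sends s) + size (sends t).
pose k := (#|K0| * L.+1).+1.
have hk : k = (#|K0| * L.+1).+1 by [].
clearbody k.
set c := s ++ flatten (nseq k w) ++ t.
have Wc : walk T1 h1 c h1.
  apply/walk_cat; exists p; split => //; apply/walk_cat; exists p; split => //.
  exact: walk_iter.
have [W [WW [SW RW]]] := (aff (recvs c) (sends c)).2 (ex_intro _ c (conj Wc (conj erefl erefl))).
have := count_bound (hsc_P ns0) WW.
rewrite predC_isS -size_recvs -size_sends RW SW /c !sends_cat !recvs_cat !size_cat.
rewrite size_sends_iter size_recvs_iter.
have -> : size (sends w) = 0 by rewrite size_sends; apply/eqP; rewrite -leqn0 leqNgt -has_count; apply/hasPn => -[x|x] // /(allP Rw).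
have : 0 < size (recvs w) by rewrite size_recvs; move: (Rw); rewrite all_count => /eqP ->; case: (w) wn.
rewrite /L in hk. set r := size (recvs w). move=> r0. nia.
Qed.


Lemma sends_rcons_l (S R : finType) (w : seq (S + R)) a :
  sends (rcons w (inl a)) = rcons (sends w) a.
Proof. by rewrite -cats1 sends_cat cats1. Qed.
Lemma sends_rcons_r (S R : finType) (w : seq (S + R)) b :
  sends (rcons w (inr b)) = sends w.
Proof. by rewrite -cats1 sends_cat cats0. Qed.
Lemma recvs_rcons_l (S R : finType) (w : seq (S + R)) a :
  recvs (rcons w (inl a)) = recvs w.
Proof. by rewrite -cats1 recvs_cat cats0. Qed.
Lemma recvs_rcons_r (S R : finType) (w : seq (S + R)) b :
  recvs (rcons w (inr b)) = rcons (recvs w) b.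
Proof. by rewrite -cats1 recvs_cat cats1. Qed.

Lemma hist g : reach g -> exists u v, walk T0 h0 u g.1.1 /\ walk T1 h1 v g.1.2 /\
  sends u = recvs v ++ g.2.1 /\ sends v = recvs u ++ g.2.2.
Proof.
elim=> [|g1 g2 _ [u [v [Wu [Wv [E1 E2]]]]] st].
  by exists [::], [::].
case: st Wu Wv E1 E2 => /=.
- move=> p0 q0 p1 xa xb a Ta Wu Wv E1 E2.
  exists (rcons u (inl a)), v; split; first exact: walk_rcons Wu Ta.
  by rewrite sends_rcons_l recvs_rcons_l E1 rcons_cat.
- move=> p0 q0 p1 xa xb b Tb Wu Wv E1 E2.
  exists (rcons u (inr b)), v; split; first exact: walk_rcons Wu Tb.
  by rewrite sends_rcons_r recvs_rcons_r E1 E2 cat_rcons.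
- move=> p0 p1 q1 xa xb b Tb Wu Wv E1 E2.
  exists u, (rcons v (inl b)); split => //; split; first exact: walk_rcons Wv Tb.
  by rewrite sends_rcons_l recvs_rcons_l E2 rcons_cat.
- move=> p0 p1 q1 xa xb a Ta Wu Wv E1 E2.
  exists u, (rcons v (inr a)); split => //; split; first exact: walk_rcons Wv Ta.
  by rewrite sends_rcons_r recvs_rcons_r E1 E2 cat_rcons.
Qed.

Lemma bounded_of_nsc : SR_machine T0 -> SR_machine T1 -> affine h0 h1 T0 T1 ->
  ~ has_send_cycle T0 -> ~ has_send_cycle T1 -> bounded_channel h0 h1 T0 T1.
Proof.
move=> sr0 sr1 aff ns0 ns1.
have nr0 := no_rc0 sr0 aff ns1; have nr1 := no_rc1 sr1 aff ns0.
have [N0 HN0] := comp_bound sr0 h0; have [N1 HN1] := comp_bound sr1 h1.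
exists ((1 + #|K0| + #|K0| * #|K0|) * N1.+1 + (1 + #|K1| + #|K1| * #|K1|) * N0.+1).
move=> [[p0 p1] [xa xb]] /hist /= [u [v [Wu [Wv [E1 E2]]]]].
have [s [Ws Ss]] := HN1 p1.
have Wvs : walk T1 h1 (v ++ s) h1 by apply/walk_cat; exists p1.
have [U [WU [SU RU]]] := (aff (recvs (v ++ s)) (sends (v ++ s))).2
   (ex_intro _ (v ++ s) (conj Wvs (conj erefl erefl))).
have H1 : recvs U = recvs u ++ (xb ++ sends s) by rewrite RU sends_cat E2 catA.
have H2 : sends U = recvs v ++ recvs s by rewrite SU recvs_cat.
have Ba := keyL sr0 (hsc_P ns0) nr0 Wu WU (ex_intro _ _ H1) (ex_intro _ _ E1) (ex_intro _ _ H2).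
have [t [Wt St]] := HN0 p0.
have Wut : walk T0 h0 (u ++ t) h0 by apply/walk_cat; exists p0.
have [W [WW [RW SW]]] := (aff (sends (u ++ t)) (recvs (u ++ t))).1
   (ex_intro _ (u ++ t) (conj Wut (conj erefl erefl))).
have H3 : recvs W = recvs v ++ (xa ++ sends t) by rewrite RW sends_cat E1 catA.
have H4 : sends W = recvs u ++ recvs t by rewrite SW recvs_cat.
have Bb := keyL sr1 (hsc_P ns1) nr1 Wv WW (ex_intro _ _ H3) (ex_intro _ _ E2) (ex_intro _ _ H4).
move: Ba Bb; rewrite E1 E2 H2 H4 !size_cat !addKn.
have r1 : size (recvs s) <= N1 by rewrite size_recvs; apply: leq_trans (count_size _ _) Ss.
have r0 : size (recvs t) <= N0 by rewrite size_recvs; apply: leq_trans (count_size _ _) St.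
move=> Ba Bb.
rewrite !leq_add2l in Ba Bb. apply: leq_add.
  by apply: leq_trans Ba _; apply: leq_mul => //; rewrite ltnS.
by apply: leq_trans Bb _; apply: leq_mul => //; rewrite ltnS.
Qed.


Definition Concl p0 p1 (u : seq (Ma + Mb)) (v : seq (Mb + Ma)) : Prop :=
  (forall u1 u2, u = u1 ++ u2 -> exists g, reach g /\ walk T0 p0 u1 g.1.1) /\
  (forall v1 v2, v = v1 ++ v2 -> exists g, reach g /\ walk T1 p1 v1 g.1.2).

Lemma lift0 p0 p1 xa xb e r u v :
  T0 p0 e r -> reach ((p0, p1), (xa, xb)) -> Concl r p1 u v -> Concl p0 p1 (e :: u) v.
Proof.
move=> Te Rg [C0 C1]; split => //.
case=> [|e1 u1] u2 /=.
  by move=> _; exists ((p0, p1), (xa, xb)).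
case=> <- Eu. have [g [Rg' W]] := C0 u1 u2 Eu. exists g; split => //. by exists r.
Qed.

Lemma lift1 p0 p1 xa xb e r u v :
  T1 p1 e r -> reach ((p0, p1), (xa, xb)) -> Concl p0 r u v -> Concl p0 p1 u (e :: v).
Proof.
move=> Te Rg [C0 C1]; split => //.
case=> [|e1 v1] v2 /=.
  by move=> _; exists ((p0, p1), (xa, xb)).
case=> <- Ev. have [g [Rg' W]] := C1 v1 v2 Ev. exists g; split => //. by exists r.
Qed.

Lemma progress : SR_machine T0 -> SR_machine T1 -> deadlock_free h0 h1 T0 T1 ->
  forall n p0 p1 xa xb u v q0 q1, size u + size v <= n ->
  reach ((p0, p1), (xa, xb)) ->
  walk T0 p0 u q0 -> walk T1 p1 v q1 ->
  xa ++ sends u = recvs v -> xb ++ sends v = recvs u ->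
  Concl p0 p1 u v.
Proof.
move=> [srt0 _ _] [srt1 _ _] df.
elim=> [|n IH] p0 p1 xa xb u v q0 q1 Hn Rg Wu Wv I1 I2.
  case: u v Hn {Wu Wv I1 I2} => [|//] [|//] _.
  by split=> -[|x u1] u2 // _; exists ((p0, p1), (xa, xb)).
case: u Hn Wu I1 I2 => [|e u] Hn Wu I1 I2.
  case: v Hn Wv I1 I2 => [|e' v] Hn Wv I1 I2.
    by split=> -[|x u1] u2 // _; exists ((p0, p1), (xa, xb)).
  case: Wv => r [Te Wv].
  case: e' Te I1 I2 Hn => [b|a] Te I1 I2 Hn.
    have Rg' := reach_step Rg (step_send1 _ _ _ _ Te).
    apply: lift1 Te Rg _. apply: IH Rg' Wu Wv _ _.
    - by move: Hn => /=; lia.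
    - by move: I1; rewrite /recvs /=.
    - by move: I2; rewrite /sends /= -/(sends _) cat_rcons.
  move: I1; rewrite cats0 /recvs /= -/(recvs _) => I1. subst xa.
  have Rg' := reach_step Rg (step_recv1 _ _ _ _ Te).
  apply: lift1 Te Rg _. apply: IH Rg' Wu Wv _ _.
  - by move: Hn => /=; lia.
  - by rewrite cats0.
  - by move: I2; rewrite /sends /= -/(sends _).
case: Wu => r [Te Wu].
case: e Te I1 I2 Hn => [a|b] Te I1 I2 Hn.
  have Rg' := reach_step Rg (step_send0 _ _ _ _ Te).
  apply: lift0 Te Rg _. apply: IH Rg' Wu Wv _ _.
  - by move: Hn => /=; lia.
  - by move: I1; rewrite /sends /= -/(sends _) cat_rcons.
  - by move: I2; rewrite /recvs /=.
have F0recv : forall xb', xb = b :: xb' -> Concl p0 p1 (inr b :: u) v.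
  move=> xb' Exb; subst xb.
  have Rg' := reach_step Rg (step_recv0 _ _ _ _ Te).
  apply: lift0 Te Rg _. apply: IH Rg' Wu Wv _ _.
  - by move: Hn => /=; lia.
  - by move: I1; rewrite /sends /= -/(sends _).
  - by move: I2; rewrite /recvs /= -/(recvs _) => -[].
case: v Hn Wv I1 I2 F0recv => [|e' v] Hn Wv I1 I2 F0recv.
  move: I2; rewrite cats0 /recvs /= -/(recvs _) => I2. exact: F0recv I2.
case: Wv => r' [Te' Wv].
case: e' Te' I1 I2 Hn F0recv => [b'|a] Te' I1 I2 Hn F0recv.
  have Rg' := reach_step Rg (step_send1 _ _ _ _ Te').
  apply: lift1 Te' Rg _. apply: IH Rg' (ex_intro _ r (conj Te Wu) : walk T0 p0 (inr b :: u) q0) Wv _ _.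
  - by move: Hn => /=; lia.
  - by move: I1; rewrite /recvs /=.
  - by move: I2; rewrite /sends /= -/(sends _) cat_rcons.
case: xb I2 F0recv Rg => [|b0 xb] I2 F0recv Rg; last first.
  move: I2; rewrite /recvs /= -/(recvs _) => -[Eb _]; subst b0. exact: F0recv.
case: xa I1 Rg => [|a0 xa] I1 Rg.
  exfalso; apply: (df _ Rg); split => //=.
  + case: (srt0 p0) => // H; by move: (H b r); rewrite Te.
  + case: (srt1 p1) => // H; by move: (H a r'); rewrite Te'.
move: I1; rewrite /recvs /= -/(recvs _) => -[Ea I1]; subst a0.
have Rg' := reach_step Rg (step_recv1 _ _ _ _ Te').
apply: lift1 Te' Rg _. apply: IH Rg' (ex_intro _ r (conj Te Wu) : walk T0 p0 (inr b :: u) q0) Wv _ _.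
- by move: Hn => /=; lia.
- exact: I1.
- by move: I2.
Qed.

Lemma pump0 p p1 xa xb w q : reach ((p, p1), (xa, xb)) -> walk T0 p w q -> all isS w ->
  reach ((q, p1), (xa ++ sends w, xb)).
Proof.
elim: w p xa => [|e w IH] p xa Rg /=.
  by move=> <- _; rewrite cats0.
case=> r [Te W] /andP [Se Sw]. case: e Te Se => // a Te _.
have Rg' := reach_step Rg (step_send0 _ _ _ _ Te).
have := IH r _ Rg' W Sw. by rewrite cat_rcons.
Qed.

Lemma pump1 p0 p xa xb w q : reach ((p0, p), (xa, xb)) -> walk T1 p w q -> all isS w ->
  reach ((p0, q), (xa, xb ++ sends w)).
Proof.
elim: w p xb => [|e w IH] p xb Rg /=.
  by move=> <- _; rewrite cats0.
case=> r [Te W] /andP [Se Sw]. case: e Te Se => // b Te _.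
have Rg' := reach_step Rg (step_send1 _ _ _ _ Te).
have := IH r _ Rg' W Sw. by rewrite cat_rcons.
Qed.

End Proto.
Theorem theorem6p3 (Ma Mb K0 K1 : finType) (h0 : K0) (h1 : K1)
    (T0 : K0 -> Ma + Mb -> K0 -> bool) (T1 : K1 -> Mb + Ma -> K1 -> bool) :
  SR_machine T0 -> SR_machine T1 ->
  affine h0 h1 T0 T1 ->
  deadlock_free h0 h1 T0 T1 ->
  (bounded_channel h0 h1 T0 T1 <-> (~ has_send_cycle T0 /\ ~ has_send_cycle T1)).
Proof.
move=> sr0 sr1 aff df; split; last by case=> ns0 ns1; exact: bounded_of_nsc.
move=> [N HN]; split.
- move=> [p [c [cn [Wc Sc]]]].
  have [_ sc _] := sr0.
  have [s Ws] := sc h0 p; have [t Wt] := sc p h0.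
  have Wst : walk T0 h0 (s ++ t) h0 by apply/walk_cat; exists p.
  have [W [WW [RW SW]]] := (aff (sends (s ++ t)) (recvs (s ++ t))).1
     (ex_intro _ (s ++ t) (conj Wst (conj erefl erefl))).
  have I1 : [::] ++ sends (s ++ t) = recvs W by rewrite RW.
  have I2 : [::] ++ sends W = recvs (s ++ t) by rewrite SW.
  have [C0 _] := progress sr0 sr1 df (leqnn _) (reach_init h0 h1 T0 T1) Wst WW I1 I2.
  have [[[p0 p1] [xa xb]] [Rg Wg]] := C0 s t erefl.
  have E := walk_det sr0 Wg Ws. simpl in E. subst p0.
  have := pump0 Rg (@walk_iter _ _ _ T0 p c N.+1 Wc) (all_iter N.+1 Sc).
  move=> /HN /=; rewrite !size_cat sends_cat size_cat size_sends_iter.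
  have : 0 < size (sends c).
    by rewrite size_sends; move: (Sc); rewrite all_count => /eqP ->; case: (c) cn.
  nia.
- move=> [p [c [cn [Wc Sc]]]].
  have [_ sc _] := sr1.
  have [s Ws] := sc h1 p; have [t Wt] := sc p h1.
  have Wst : walk T1 h1 (s ++ t) h1 by apply/walk_cat; exists p.
  have [U [WU [SU RU]]] := (aff (recvs (s ++ t)) (sends (s ++ t))).2
     (ex_intro _ (s ++ t) (conj Wst (conj erefl erefl))).
  have I1 : [::] ++ sends U = recvs (s ++ t) by rewrite SU.
  have I2 : [::] ++ sends (s ++ t) = recvs U by rewrite RU.
  have [_ C1] := progress sr0 sr1 df (leqnn _) (reach_init h0 h1 T0 T1) WU Wst I1 I2.
  have [[[p0 p1] [xa xb]] [Rg Wg]] := C1 s t erefl.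
  have E := walk_det sr1 Wg Ws. simpl in E. subst p1.
  have := pump1 Rg (@walk_iter _ _ _ T1 p c N.+1 Wc) (all_iter N.+1 Sc).
  move=> /HN /=; rewrite !size_cat sends_cat size_cat size_sends_iter.
  have : 0 < size (sends c).
    by rewrite size_sends; move: (Sc); rewrite all_count => /eqP ->; case: (c) cn.
  nia.
Qed.
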